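(* Let $d\ge3$ and let $\mathcal C\subset\mathbb T^d=\mathbb R^d/\mathbb Z^d$ be a smooth curve of length $L$ with unit speed parameterization $\gamma:[0,L]\to\mathbb T^d$. For a positive integer $E$ with $\mathcal E(E)=\{\mu\in\mathbb Z^d:|\mu|^2=E\}$ nonempty, let $N=\#\mathcal E(E)$ and $$r(t_1,t_2)=\frac1N\sum_{\mu\in\mathcal E(E)}\cos\left(2\pi\langle\mu,\gamma(t_1)-\gamma(t_2)\rangle\right).$$ Then there exists a constant $c_0>0$ (independent of $E$) such that for all $E$ and all $t_1\ne t_2\in[0,L]$ with $|t_2-t_1|<c_0/\sqrt E$ we have $r(t_1,t_2)\ne\pm1$.
   Context: A curve means a parameterized, compact, immersed curve. $r$ is the covariance function $\mathbb E[f(t_1)f(t_2)]$ of the restriction $f=F\circ\gamma$ of the arithmetic random wave $F(x)=N^{-1/2}\sum_{\mu\in\mathcal E(E)}a_\mu e^{2\pi i\langle\mu,x\rangle}$ ($a_\mu$ standard complex Gaussians, independent save for $a_{-\mu}=\overline{a_\mu}$). *)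

(* Defs.v *)
From HB Require Import structures.
From mathcomp Require Import all_boot all_order all_algebra.
From mathcomp Require Import all_classical all_reals all_analysis.
Set Implicit Arguments. Unset Strict Implicit. Unset Printing Implicit Defensive.
Import Order.TTheory GRing.Theory Num.Theory.
Local Open Scope ring_scope.

(* Every such mu has |mu_i| <= E,
   so we encode mu by a finite function m : 'I_d -> 'I_(2E+1) with
   mu_i = m_i - E.  This is a bijection between [latE d E] and
   E(E) = {mu in Z^d : |mu|^2 = E}. *)
Definition lat_coord (d E : nat) (m : {ffun 'I_d -> 'I_(2 * E).+1}) (i : 'I_d) : int :=
  (nat_of_ord (m i))%:Z - E%:Z.

Definition latE (d E : nat) : {set {ffun 'I_d -> 'I_(2 * E).+1}} :=
  [set m | \sum_(i < d) (lat_coord m i) ^+ 2 == E%:Z].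

(* The covariance r(t1,t2) = N^{-1} sum_{mu in E(E)} cos(2 pi <mu, gamma t1 - gamma t2>),
   with gamma given through a lift to R^d (coordinates gamma i). *)
Definition cov_r (R : realType) (d E : nat) (gamma : 'I_d -> R -> R) (t1 t2 : R) : R :=
  (#|latE d E|%:R)^-1 *
  \sum_(m in latE d E)
     cos (2 * pi * \sum_(i < d) (lat_coord m i)%:~R * (gamma i t1 - gamma i t2)).

(* Main.v *)
Require Import Defs.
From HB Require Import structures.
From mathcomp Require Import all_boot all_order all_algebra all_fingroup.
From mathcomp Require Import all_classical all_reals all_analysis.
From mathcomp Require Import ring lra zify.
Import Order.TTheory GRing.Theory Num.Theory.
Local Open Scope ring_scope.

Lemma mvt_gen (R : realType) (f : R -> R) (a b s t : R) :
  (forall x, derivable f x 1) -> a <= s <= b -> a <= t <= b ->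
  exists xi, [/\ a <= xi <= b, `|xi - s| <= `|t - s| & f t - f s = derive1 f xi * (t - s)].
Proof.
move=> df /andP[hs1 hs2] /andP[ht1 ht2].
have der : forall x : R, is_derive x 1 f (derive1 f x).
  by move=> x; rewrite derive1E; apply: derivableP.
case: (ltgtP s t) => [st|ts|<-].
- have [c /[!in_itv] /= /andP[sc ct] ->] := MVT st (fun x _ => der x) (derivable_within_continuous (fun x _ => df x)).
  exists c; split => //; first by apply/andP; split; lra.
  rewrite !ger0_norm; lra.
- have [c /[!in_itv] /= /andP[tc cs] e] := MVT ts (fun x _ => der x) (derivable_within_continuous (fun x _ => df x)).
  exists c; split => //; first by apply/andP; split; lra.
  rewrite ler0_norm ?ler0_norm; lra.
  have -> : f t - f s = - (f s - f t) by rewrite opprB.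
  by rewrite e; lra.
- exists s; split => //; first by apply/andP.
  by rewrite !subrr mulr0.
Qed.

Lemma avg_facts (R : realType) (T : finType) (A : {set T}) (F : T -> R) :
  (0 < #|A|)%N -> (forall m, m \in A -> 0 < F m <= 1) ->
  (#|A|%:R^-1 * \sum_(m in A) F m != -1) /\
  (#|A|%:R^-1 * \sum_(m in A) F m = 1 -> forall m, m \in A -> F m = 1).
Proof.
move=> /card_gt0P [m0 m0in] hF.
have N0 : (0 : R) < #|A|%:R by rewrite ltr0n; apply/card_gt0P; exists m0.
have S0 : 0 < \sum_(m in A) F m.
  rewrite (bigD1 m0) //=; have /andP[h _] := hF _ m0in.
  apply: ltr_pwDl => //; apply: sumr_ge0 => k /andP[kA _].
  by have /andP[/ltW] := hF _ kA.
split.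
  apply/negP => /eqP e.
  have : 0 < #|A|%:R^-1 * \sum_(m in A) F m by apply: mulr_gt0 => //; rewrite invr_gt0.
  by rewrite e; lra.
move=> e.
have eS : \sum_(m in A) F m = #|A|%:R.
  by move: e; rewrite mulrC => /divr1_eq.
have e0 : \sum_(m in A) (1 - F m) = 0.
  by rewrite sumrB eS sumr_const subrr.
have hnn : forall k, k \in A -> 0 <= 1 - F k.
  by move=> k kA; have /andP[_] := hF _ kA; lra.
by move=> m mA; have := psumr_eq0P hnn e0 mA; lra.
Qed.

Lemma cos_eq1_small (R : realType) (x : R) :
  `|x| < pi / 2 -> cos x = 1 -> x = 0.
Proof.
move=> hx e.
have pi0 := @pi_gt0 R.
have ea : cos `|x| = cos 0.
  by rewrite cos0; case: (ler0P x) => h; rewrite ?cosN.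
have : `|x| = 0.
  apply: (@cos_inj R) => //; rewrite in_itv /=.
    by rewrite normr_ge0 /=; lra.
  by lra.
by move/normr0_eq0.
Qed.

Lemma bound_on (R : realType) (g : R -> R) (a b : R) :
  (forall x, derivable g x 1) -> a <= b ->
  exists M, 0 <= M /\ forall x, a <= x <= b -> `|g x| <= M.
Proof.
move=> dg ab.
have [c1 _ h1] := EVT_max ab (derivable_within_continuous (fun x _ => dg x)).
have [c2 _ h2] := EVT_min ab (derivable_within_continuous (fun x _ => dg x)).
exists (`|g c1| + `|g c2|); split; first by rewrite addr_ge0.
move=> x hx; have xab : x \in `[a, b] by rewrite in_itv.
have := h1 _ xab; have := h2 _ xab.
have := ler_norm (g c1); have := normr_ge0 (g c1).
have := ler_norm (- g c2); rewrite normrN.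
have := normr_ge0 (g c2).
rewrite ler_norml; lra.
Qed.

Lemma lat_sym (R : realType) (d E : nat) (i : 'I_d) (v : 'I_d -> R) :
  (0 < E)%N -> (0 < #|latE d E|)%N ->
  (forall m, m \in latE d E -> \sum_(j < d) (lat_coord m j)%:~R * v j = 0) ->
  v i = 0.
Proof.
move=> E0 /card_gt0P [m0 m0in] H.
have [j hj] : exists j, lat_coord m0 j != 0.
  apply/existsP; apply: contraTT m0in => /existsPn hall.
  rewrite inE big1; first by rewrite eq_sym eqz_nat -lt0n E0.
  by move=> k _; move: (hall k); rewrite negbK => /eqP ->.
pose m1 : {ffun 'I_d -> 'I_(2 * E).+1} := [ffun k => m0 (tperm i j k)].
have c1 : forall k, lat_coord m1 k = lat_coord m0 (tperm i j k).
  by move=> k; rewrite /lat_coord ffunE.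
have m1in : m1 \in latE d E.
  move: m0in; rewrite !inE => /eqP <-; apply/eqP.
  rewrite [RHS](reindex_inj (@perm_inj _ (tperm i j))).
  by apply: eq_bigr => k _; rewrite c1.
pose m2 : {ffun 'I_d -> 'I_(2 * E).+1} :=
  [ffun k => if k == i then rev_ord (m1 k) else m1 k].
have c2 : forall k, lat_coord m2 k = if k == i then - lat_coord m1 k else lat_coord m1 k.
  move=> k; rewrite /lat_coord ffunE; case: eqP => // _.
  have hk : (m1 k <= 2 * E)%N by rewrite -ltnS.
  rewrite /= subSS.
  move: hk; set x := nat_of_ord (m1 k); move=> hk.
  rewrite -subzn // PoszM; lia.
have m2in : m2 \in latE d E.
  move: m1in; rewrite !inE => /eqP <-; apply/eqP.
  apply: eq_bigr => k _; rewrite c2; case: eqP => // _; by rewrite sqrrN.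
have := H _ m1in; have := H _ m2in.
rewrite (bigD1 i) //= (bigD1 i (P := predT)) //= c2 eqxx => e2 e1.
have : \sum_(k < d | k != i) (lat_coord m2 k)%:~R * v k =
       \sum_(k < d | k != i) (lat_coord m1 k)%:~R * v k.
  by apply: eq_bigr => k /negPf ki; rewrite c2 ki.
move=> es; rewrite es in e2.
have : 2 * ((lat_coord m1 i)%:~R * v i) = 0 :> R.
  rewrite rmorphN /= in e2; lra.
move/eqP; rewrite mulf_eq0 pnatr_eq0 /= mulf_eq0 intr_eq0 c1 tpermL (negPf hj) /=.
by move/eqP.
Qed.

Arguments mvt_gen {R f a b s t}.
Arguments bound_on {R g a b}.

Arguments avg_facts {R T A F}.

Lemma sq_le1_norm (R : realType) (x : R) : x ^+ 2 <= 1 -> `|x| <= 1.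
Proof. by move=> h; rewrite -(@expr_le1 _ 2) // real_normK ?num_real. Qed.

Lemma term_le_sum (R : numDomainType) d (F : 'I_d -> R) j :
  (forall k, 0 <= F k) -> F j <= \sum_(k < d) F k.
Proof. by move=> h; rewrite (bigD1 j) //= lerDl sumr_ge0. Qed.
Arguments term_le_sum {R d} F j.

Theorem lemma2p4 (R : realType) (d : nat) (hd : (3 <= d)%N) (L : R)
  (gamma : 'I_d -> R -> R)
  (gamma_smooth : forall (i : 'I_d) (n : nat) (t : R),
      derivable (derive1n n (gamma i)) t 1)
  (gamma_unit_speed : forall t : R, 0 <= t <= L ->
      \sum_(i < d) (derive1 (gamma i) t) ^+ 2 = 1) :
  exists c0 : R, 0 < c0 /\
    forall E : nat, (0 < E)%N -> (0 < #|latE d E|)%N ->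
    forall t1 t2 : R, 0 <= t1 <= L -> 0 <= t2 <= L -> t1 != t2 ->
      `|t2 - t1| < c0 / Num.sqrt (E%:R) ->
      @cov_r R d E gamma t1 t2 != 1 /\ @cov_r R d E gamma t1 t2 != -1.
Proof.
have [Lneg|L0] := ltP L 0.
  exists 1; split => // E _ _ t1 t2 /andP[h1 h2]; lra.
have d0 : (0 : R) < d%:R by rewrite ltr0n; lia.
have dg0 : forall i x, derivable (gamma i) x 1.
  by move=> i x; have := gamma_smooth i 0 x; rewrite derive1n0.
have dg1 : forall i x, derivable (derive1 (gamma i)) x 1.
  by move=> i x; have := gamma_smooth i 1 x; rewrite derive1n1.
have dg2 : forall i x, derivable (derive1 (derive1 (gamma i))) x 1.
  by move=> i x; have := gamma_smooth i 2 x; rewrite derive1nS derive1n1.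
have [Mf hMf] := choice (fun i => bound_on (dg2 i) L0).
pose M := \sum_(i < d) Mf i.
have M0 : 0 <= M by apply: sumr_ge0 => i _; case: (hMf i).
have hM : forall i x, 0 <= x <= L -> `|derive1 (derive1 (gamma i)) x| <= M.
  move=> i x hx; have [_ h] := hMf i; apply: (le_trans (h x hx)).
  by apply: term_le_sum => k; case: (hMf k).
pose c0 := (4 * d%:R * (M + 1))^-1.
have c0p : 0 < c0 by rewrite invr_gt0; apply: mulr_gt0 => //; lra.
have c0e : c0 * (4 * d%:R * (M + 1)) = 1 by rewrite mulVf //; apply: lt0r_neq0; apply: mulr_gt0 => //; lra.
exists c0; split => // E E0 NE t1 t2 ht1 ht2 t12 hh.
have sE1 : 1 <= Num.sqrt (E%:R : R).
  by rewrite -{1}sqrtr1 ler_sqrt ?ler0n // ler1n.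
set h := t2 - t1.
have hc : Num.sqrt (E%:R : R) * `|h| < c0.
  by move: hh; rewrite ltr_pdivlMr ; [rewrite mulrC | lra].
have hc1 : `|h| < c0.
  by have := normr_ge0 h; nra.
pose v j := gamma j t1 - gamma j t2.
have hv : forall j, `|v j| <= `|h|.
  move=> j; have [xi [hxi _ e]] := mvt_gen (dg0 j) ht2 ht1.
  rewrite /v e normrM.
  have : `|derive1 (gamma j) xi| <= 1.
    apply: sq_le1_norm; rewrite -(gamma_unit_speed _ hxi).
    by apply: (term_le_sum (fun k => derive1 (gamma k) xi ^+ 2)) => k; exact: sqr_ge0.
  have -> : `|t1 - t2| = `|h| by rewrite /h distrC.
  by have := normr_ge0 h; have := normr_ge0 (derive1 (gamma j) xi); nra.
have [i hi] : exists i, d%:R^-1 <= (derive1 (gamma i) t1) ^+ 2.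
  apply/existsP; apply: contraT => /existsPn hn.
  have : \sum_(k < d) derive1 (gamma k) t1 ^+ 2 < \sum_(k < d) d%:R^-1.
    apply: ltr_sum; first by apply/hasP; exists (Ordinal (leq_trans (isT : (1 <= 3)%N) hd)); rewrite ?mem_index_enum.
    by move=> k _; move: (hn k); rewrite -ltNge.
  rewrite gamma_unit_speed // sumr_const card_ord -[_ *+ d]mulr_natr mulVf ?lt_irreflexive //.
  exact: lt0r_neq0.
have hia : d%:R^-1 <= `|derive1 (gamma i) t1|.
  have h1 : `|derive1 (gamma i) t1| <= 1.
    apply: sq_le1_norm; rewrite -(gamma_unit_speed _ ht1).
    by apply: (term_le_sum (fun k => derive1 (gamma k) t1 ^+ 2)) => k; exact: sqr_ge0.
  move: hi; rewrite -real_normK ?num_real //.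
  by have := normr_ge0 (derive1 (gamma i) t1); nra.
have vi0 : v i != 0.
  have [xi [hxi hxi1 e]] := mvt_gen (dg0 i) ht1 ht2.
  have [z [hz _ e2]] := mvt_gen (dg1 i) ht1 hxi.
  have bz := hM i z hz.
  have b2 : `|derive1 (gamma i) xi - derive1 (gamma i) t1| <= M * `|h|.
    rewrite e2 normrM; rewrite -/h in hxi1.
    by have := normr_ge0 (xi - t1); have := normr_ge0 (derive1 (derive1 (gamma i)) z); nra.
  have Mh : M * `|h| < d%:R^-1.
    have : (M + 1) * c0 = d%:R^-1 / 4.
      rewrite /c0; field; apply/andP; split; apply: lt0r_neq0 => //; lra.
    move=> eMc; have hd0 : 0 < d%:R^-1 :> R by rewrite invr_gt0.
    have : M * `|h| <= M * c0 by apply: ler_wpM2l => //; exact: ltW.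
    nra.
  have hxiab : 0 < `|derive1 (gamma i) xi|.
    have := ler_distD (derive1 (gamma i) xi) (derive1 (gamma i) t1) 0.
    rewrite distrC in b2; rewrite !subr0; lra.
  have h0 : h != 0 by rewrite /h subr_eq0 eq_sym.
  rewrite /v -oppr_eq0 opprB e mulf_neq0 //.
  by rewrite -normr_gt0.
pose x (m : {ffun 'I_d -> 'I_(2 * E).+1}) := \sum_(j < d) (lat_coord m j)%:~R * v j.
have hx : forall m, m \in latE d E -> `|x m| < 4^-1.
  move=> m min.
  have hmu : forall j, `|(lat_coord m j)%:~R : R| <= Num.sqrt (E%:R : R).
    move=> j.
    have h1 : lat_coord m j ^+ 2 <= E%:Z.
      move: min; rewrite inE => /eqP <-.
      by apply: (term_le_sum (fun k => lat_coord m k ^+ 2)) => k; exact: sqr_ge0.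
    have h2 : ((lat_coord m j)%:~R : R) ^+ 2 <= E%:R.
      by rewrite -rmorphXn /= -[E%:R]/((E%:Z)%:~R : R) ler_int.
    by rewrite -sqrtr_sqr ler_sqrt.
  apply: (le_lt_trans (ler_norm_sum _ _ _)).
  apply: (@le_lt_trans _ _ (\sum_(j < d) Num.sqrt (E%:R : R) * `|h|)).
    apply: ler_sum => j _; rewrite normrM; apply: ler_pM; [exact: normr_ge0 | exact: normr_ge0 | exact: hmu | exact: hv].
  rewrite sumr_const card_ord -[_ *+ d]mulr_natl.
  have y1 : d%:R * c0 * (4 * (M + 1)) = 1 by rewrite -[RHS]c0e; ring.
  have y0 : 0 < d%:R * c0 by apply: mulr_gt0.
  have y2 : d%:R * c0 <= 4^-1.
    have := mulr_ge0 (ltW y0) M0; lra.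
  have : d%:R * (Num.sqrt (E%:R : R) * `|h|) < d%:R * c0 by rewrite ltr_pM2l.
  lra.
have pi0 := @pi_gt0 R.
have hsmall : forall m, m \in latE d E -> `|2 * pi * x m| < pi / 2.
  move=> m min; have := hx m min; rewrite normrM (gtr0_norm (_ : 0 < 2 * pi)); last lra.
  by have := normr_ge0 (x m); nra.
have hcos : forall m, m \in latE d E -> 0 < cos (2 * pi * x m) <= 1.
  move=> m min; rewrite cos_le1 andbT; apply: cos_gt0_pihalf.
  by rewrite -ltr_norml; apply: hsmall.
have [A1 A2] := avg_facts NE hcos.
have -> : cov_r E gamma t1 t2 =
  #|latE d E|%:R^-1 * \sum_(m in latE d E) cos (2 * pi * x m) by [].
split => //.
apply/negP => /eqP /A2 hall; apply: (negP vi0); apply/eqP.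
apply: (@lat_sym R d E i v E0 NE) => m min.
have := @cos_eq1_small R (2 * pi * x m) (hsmall m min) (hall m min).
move/eqP; rewrite mulf_eq0 => /orP [|/eqP //].
by rewrite mulf_eq0 pnatr_eq0 /= => /eqP pe; lra.
Qed.
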